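(* Let $m\ge0$, $n\ge1$, $1\le i\le n$ and $\varepsilon\in\{0,1\}$. There exists a digraph map $\Phi:I_{6m}^{\otimes n}\to|\sqcap^n_{i,\varepsilon}|_{2m}$ whose restriction to $|\sqcap^n_{i,\varepsilon}|_{6m}\subseteq I_{6m}^{\otimes n}$ equals the coordinatewise map $c^{2m}:|\sqcap^n_{i,\varepsilon}|_{6m}\to|\sqcap^n_{i,\varepsilon}|_{2m}$.
   Context: Digraphs: vertex sets with arrows $E\subseteq V^2$ containing the diagonal; digraph maps preserve arrows. Box product $G\otimes H$: arrow $(g,h)\to(g',h')$ iff ($g\to g'$, $h=h'$) or ($g=g'$, $h\to h'$). $I_k$ is the digraph with vertices $\{0,\dots,k\}$ and non-degenerate arrows $2a\to2a+1$ and $2b+2\to2b+1$. For $k\ge0$, $|\sqcap^n_{i,\varepsilon}|_{k}$ denotes the induced subdigraph of $I_k^{\otimes n}$ on the vertices $v=(v_1,\dots,v_n)$ such that either $v_j\in\{0,k\}$ for some $j\ne i$, or $v_i=(1-\varepsilon)k$. The map $c^{2m}:I_{6m}\to I_{2m}$ is $c^{2m}(x)=\min(\max(x-2m,0),2m)$ (a digraph map), applied coordinatewise to $I_{6m}^{\otimes n}\to I_{2m}^{\otimes n}$; it sends $|\sqcap^n_{i,\varepsilon}|_{6m}$ into $|\sqcap^n_{i,\varepsilon}|_{2m}$. *)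

(* Defs.v *)
From mathcomp Require Import all_boot.
Set Implicit Arguments. Unset Strict Implicit. Unset Printing Implicit Defensive.

Definition arrI (k : nat) (x y : 'I_k.+1) : bool :=
  (x == y) || (~~ odd x && ((nat_of_ord y == x.+1) || (y.+1 == nat_of_ord x))).

Definition vertI (k n : nat) := {ffun 'I_n -> 'I_k.+1}.

Definition arrBox (k n : nat) (v w : vertI k n) : Prop :=
  exists j : 'I_n, (forall l : 'I_n, l != j -> v l = w l) /\ arrI (v j) (w j).

(* The vertex set of |\sqcap^n_{i,eps}|_k (an induced subdigraph of I_k^{\otimes n}).
   eps = false means eps = 0 (so (1-eps)k = k), eps = true means eps = 1. *)
Definition inSqcap (k n : nat) (i : 'I_n) (eps : bool) (v : vertI k n) : Prop :=
  (exists j : 'I_n, j != i /\ (nat_of_ord (v j) = 0 \/ nat_of_ord (v j) = k))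
  \/ nat_of_ord (v i) = (if eps then 0 else k).

(* c^{2m} : I_{6m} -> I_{2m}, x |-> min(max(x - 2m, 0), 2m). *)
Definition c2m (m : nat) (x : 'I_(6 * m).+1) : 'I_(2 * m).+1 :=
  inord (minn (x - 2 * m) (2 * m)).

Definition c2mBox (m n : nat) (v : vertI (6 * m) n) : vertI (2 * m) n :=
  [ffun j => @c2m m (v j)].

(* Main.v *)
Require Import Defs.
From mathcomp Require Import all_boot zify.
Set Implicit Arguments. Unset Strict Implicit.

Definition arrP (x y : nat) : Prop := x = y \/ (x %% 2 = 0 /\ (y = x.+1 \/ y.+1 = x)).

Lemma arrI_P k (x y : 'I_k.+1) : arrI x y <-> arrP x y.
Proof.
rewrite /arrI /arrP; have := modn2 x; case: (odd x) => /= hx.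
  rewrite orbF; split; [by move/eqP=> ->; left|].
  case=> [/val_inj ->//|]; lia.
split.
  case/orP=> [/eqP->|/orP[]/eqP->]; [by left| |]; right; lia.
case=> [/val_inj->|[_ [h|h]]]; apply/orP; [by left| |]; right; apply/orP;
  [left|right]; apply/eqP; lia.
Qed.

Lemma arrP_inord K a b : a <= K -> b <= K -> arrP a b -> arrI (@inord K a) (@inord K b).
Proof. by move=> ha hb h; apply/arrI_P; rewrite !inordK. Qed.

Lemma arrP_maxl a b c : arrP a b -> arrP (maxn a c) (maxn b c).
Proof. rewrite /arrP; lia. Qed.
Lemma arrP_maxr a b c : arrP a b -> arrP (maxn c a) (maxn c b).
Proof. rewrite /arrP; lia. Qed.
Lemma arrP_minl a b c : arrP a b -> arrP (minn a c) (minn b c).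
Proof. rewrite /arrP; lia. Qed.
Lemma arrP_minr a b c : arrP a b -> arrP (minn c a) (minn c b).
Proof. rewrite /arrP; lia. Qed.
Lemma arrP_sub K a b : K %% 2 = 0 -> arrP a b -> arrP (K - a) (K - b).
Proof. rewrite /arrP; lia. Qed.
Lemma arrP_cn m a b : arrP a b -> arrP (minn (a - 2 * m) (2 * m)) (minn (b - 2 * m) (2 * m)).
Proof. rewrite /arrP; lia. Qed.
Lemma arrP_e m a b : arrP a b -> arrP (minn a (6 * m - a)) (minn b (6 * m - b)).
Proof. rewrite /arrP; lia. Qed.
Section S.
Variables (m n : nat) (i : 'I_n) (eps : bool).
Local Notation K := (6 * m).
Definition ee (v : vertI K n) (l : 'I_n) := 6 * m - minn (v l) (6 * m - v l).
Definition Ep (v : vertI K n) := \max_(l | l != i) ee v l.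
Definition GG (v : vertI K n) := minn (6 * m - Ep v) (2 * m).
Definition cn (x : nat) := minn (x - 2 * m) (2 * m).
Definition ph (v : vertI K n) :=
  if eps then minn (cn (v i)) (2 * m - GG v) else maxn (cn (v i)) (GG v).
Definition Phi (v : vertI K n) : vertI (2 * m) n :=
  [ffun l => if l == i then inord (ph v) else c2m (v l)].

Lemma ph_le v : ph v <= 2 * m.
Proof. rewrite /ph /GG /cn; case: eps; lia. Qed.

Lemma Ep_split v j : j != i -> Ep v = maxn (ee v j) (\max_(l | (l != i) && (l != j)) ee v l).
Proof. by move=> hj; rewrite /Ep (bigD1 j) //=. Qed.

Lemma GG_arr v w : (forall l, l != i -> ee v l = ee w l) -> GG v = GG w.
Proof. by move=> h; rewrite /GG /Ep (eq_bigr _ h). Qed.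

Lemma Phi_sq v : inSqcap i eps (Phi v).
Proof.
case: (boolP [exists j, (j != i) && (ee v j >= 4 * m)]).
  case/existsP=> j /andP[hj hge]; left; exists j; split => //.
  rewrite ffunE (negbTE hj) /c2m inordK; last lia.
  move: hge; rewrite /ee; lia.
rewrite negb_exists => /forallP hall.
have hb : Ep v <= 4 * m.
  apply/bigmax_leqP => l hl; move: (hall l); rewrite hl /=; lia.
right; rewrite ffunE eqxx inordK; last by have := ph_le v; lia.
rewrite /ph /GG /cn; case: eps; lia.
Qed.

Lemma Phi_c v : inSqcap i eps v -> Phi v = c2mBox v.
Proof.
move=> hv; apply/ffunP => l; rewrite !ffunE; case: eqP => [->|//].
apply: val_inj; rewrite /c2m /= !inordK; [|lia|by have := ph_le v; lia].
case: hv => [[j [hj h]]|h].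
  have : ee v j <= Ep v by apply: leq_bigmax_cond.
  have : Ep v <= 6 * m by apply/bigmax_leqP => l' _; rewrite /ee; lia.
  rewrite /ph /GG /cn /ee; case: eps h; lia.
have : Ep v <= 6 * m by apply/bigmax_leqP => l' _; rewrite /ee; lia.
rewrite /ph /GG /cn; case: eps h; lia.
Qed.

End S.
Lemma Phi_arr m n (i : 'I_n) eps (v w : vertI (6 * m) n) : arrBox v w -> arrBox (Phi i eps v) (Phi i eps w).
Proof.
case=> j [hl hj]; move/arrI_P: hj => hj.
have hc : arrP (cn m (v j)) (cn m (w j)) by apply: arrP_cn.
have hrest : forall P : pred 'I_n, (forall l, P l -> l != j) ->
   \max_(l | P l) ee v l = \max_(l | P l) ee w l.
  by move=> P hP; apply: eq_bigr => l /hP hlj; rewrite /ee hl.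
have cle : forall x : 'I_(6 * m).+1, cn m x <= 2 * m by move=> x; rewrite /cn; lia.
case: (eqVneq j i) => [eji|hji].
  have hG : GG i v = GG i w.
    by apply: GG_arr => l hli; rewrite /ee hl // eji.
  exists i; split.
    move=> l hli; rewrite !ffunE (negbTE hli) hl // eji //.
  rewrite !ffunE eqxx; apply: arrP_inord; try exact: ph_le.
  rewrite /ph hG -eji; case: eps; [exact: arrP_minl|exact: arrP_maxl].
have hvi : v i = w i by apply: hl; rewrite eq_sym.
have hE : forall x : vertI (6 * m) n, Ep i x = maxn (ee x j) (\max_(l | (l != i) && (l != j)) ee x l).
  move=> x; have := Ep_split x hji; exact.
have hR := hrest (fun l => (l != i) && (l != j)) (fun l => fun h => proj2 (andP h)).
case: (eqVneq (cn m (v j)) (cn m (w j))) => [ceq|cne].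
  exists i; split.
    move=> l hli; rewrite !ffunE (negbTE hli).
    case: (eqVneq l j) => [->|hlj]; last by rewrite hl.
    by rewrite /c2m; congr inord.
  rewrite !ffunE eqxx; apply: arrP_inord; try exact: ph_le.
  have hG : arrP (GG i v) (GG i w).
    rewrite /GG !hE hR; apply: arrP_minl; apply: arrP_sub; first lia.
    apply: arrP_maxl; apply: arrP_sub; first lia; exact: arrP_e.
  rewrite /ph hvi; case: eps; [apply: arrP_minr; apply: arrP_sub => //; lia|].
  exact: arrP_maxr.
have hG : GG i v = GG i w.
  have hin : 2 * m <= v j <= 4 * m /\ 2 * m <= w j <= 4 * m.
    move: hj cne; rewrite /arrP /cn; clear; lia.
  have ha : ee v j <= 4 * m by rewrite /ee; clear -hin; lia.
  have hb : ee w j <= 4 * m by rewrite /ee; clear -hin; lia.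
  rewrite /GG !hE hR; move: ha hb.
  set a := ee v j; set b := ee w j; set R := bigop _ _ _.
  clearbody a b R; clear; lia.
exists j; split.
  move=> l hlj; rewrite !ffunE; case: (eqVneq l i) => [_|hli]; last by rewrite hl.
  by rewrite /ph hvi hG.
rewrite !ffunE (negbTE hji); apply: arrP_inord => //; exact: cle.
Qed.

Theorem mainTheorem10 (m n : nat) (hn : 0 < n) (i : 'I_n) (eps : bool) :
  exists Phi : vertI (6 * m) n -> vertI (2 * m) n,
    (forall v, inSqcap i eps (Phi v)) /\
    (forall v w, arrBox v w -> arrBox (Phi v) (Phi w)) /\
    (forall v, inSqcap i eps v -> Phi v = @c2mBox m n v).
Proof.
exists (Phi i eps); split; [exact: Phi_sq|split; [exact: Phi_arr|exact: Phi_c]].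
Qed.
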